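(* Let $n\ge1$ and $G=\mathbf{Z}\times\mathbf{Z}/n\mathbf{Z}$. Let $m$ be a divisor of $n$ and let $(H_k)_{k>0}$ be a sequence of infinite subgroups of $G$ of rank 2. Then $(H_k)_{k>0}$ converges in $\mathcal{C}(G)$ to $\{0\}\times\langle m\rangle$ if and only if, for all $k$ large enough, there exists $g_k\in G$ such that $H_k$ is generated by $(0,m)$ and $g_k$, with $g_k\to\infty$ in $G$ (i.e. $(g_k)$ eventually leaves every finite subset of $G$).
   Context: $\mathcal{C}(G)$ is the set of subgroups of the discrete group $G$ with the Chabauty topology (for discrete $G$, this is the topology induced by the product topology on $\{0,1\}^G$). The rank of a finitely generated group is its minimal number of generators. $\langle m\rangle$ denotes the subgroup of $\mathbf{Z}/n\mathbf{Z}$ generated by the class of $m$. *)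

(* Defs.v *)
From mathcomp Require Import all_boot all_algebra.
Set Implicit Arguments. Unset Strict Implicit. Unset Printing Implicit Defensive.
Import GRing.Theory.
Local Open Scope ring_scope.

(* Z/nZ for n >= 1 : the ordinal type 'I_n, written 'I_(n.-1).+1 so that it
   carries MathComp's canonical Z/nZ additive structure (Zp). *)
Definition Zmod (n : nat) : finZmodType := 'I_(n.-1).+1.

Definition G (n : nat) : zmodType := (int * Zmod n)%type.

Definition cls (n : nat) (m : nat) : Zmod n := inZp m.

Definition is_subgroup (T : zmodType) (H : T -> Prop) : Prop :=
  H 0 /\ forall x y, H x -> H y -> H (x - y).

Definition gen (T : zmodType) (s : seq T) : T -> Prop :=
  fun x => exists c : seq int, size c = size s /\
    x = \sum_(i < size s) (nth 0 s i) *~ (nth 0 c i).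

Definition seteq (T : Type) (A B : T -> Prop) : Prop := forall x, A x <-> B x.

Definition has_rank (T : zmodType) (H : T -> Prop) (r : nat) : Prop :=
  (exists s : seq T, size s = r /\ seteq H (gen s)) /\
  (forall s : seq T, (size s < r)%N -> ~ seteq H (gen s)).

Definition infinite_set (T : eqType) (H : T -> Prop) : Prop :=
  forall s : seq T, exists x, H x /\ x \notin s.

(* Convergence in the Chabauty topology of a discrete group (= product topology
   on {0,1}^G): for every g, eventually (g \in H_k <-> g \in H). *)
Definition chabauty_cvg (T : Type) (Hs : nat -> T -> Prop) (H : T -> Prop) : Prop :=
  forall g : T, exists K : nat, forall k, (K <= k)%N -> (Hs k g <-> H g).

Definition tends_to_infty (T : eqType) (g : nat -> T) : Prop :=
  forall F : seq T, exists K : nat, forall k, (K <= k)%N -> g k \notin F.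

(* Main.v *)
Require Import Defs.
From mathcomp Require Import all_boot all_algebra.
From Stdlib Require Import Classical ClassicalEpsilon.
Import GRing.Theory Num.Theory.
Local Open Scope ring_scope.

Lemma fstMz n (x : G n) (z : int) : (x *~ z).1 = x.1 * z.
Proof. rewrite -mulrzz. exact: (raddfMz (@fst _ _)). Qed.

Lemma gen1E (T : zmodType) (a x : T) : gen [:: a] x <-> exists i : int, x = a *~ i.
Proof.
split.
  by move=> [c [Hc ->]]; exists (nth 0 c 0); rewrite big_ord1.
move=> [i ->]; exists [:: i]; split => //; by rewrite big_ord1.
Qed.

Lemma gen2E (T : zmodType) (a b x : T) :
  gen [:: a; b] x <-> exists i j : int, x = a *~ i + b *~ j.
Proof.
split.
  move=> [c [Hc ->]]; exists (nth 0 c 0), (nth 0 c 1).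
  by rewrite big_ord_recr big_ord1.
move=> [i [j ->]]; exists [:: i; j]; split => //.
by rewrite big_ord_recr big_ord1.
Qed.

Lemma sub_Mz (T : zmodType) (H : T -> Prop) : is_subgroup H ->
  forall a (i : int), H a -> H (a *~ i).
Proof.
move=> [H0 HBs] a i Ha.
have HNs : forall x, H x -> H (- x) by move=> x Hx; rewrite -sub0r; apply: (HBs).
have HDs : forall x y, H x -> H y -> H (x + y).
  by move=> x y Hx Hy; rewrite -[y]opprK; apply: (HBs) => //; apply: (HNs).
have Hn : forall k : nat, H (a *~ k).
  elim=> [|k IH]; first by rewrite mulr0z.
  by rewrite -addn1 PoszD mulrzDr mulr1z; apply: (HDs).
case: i => k; first exact: Hn.
by rewrite NegzE mulrNz; apply: (HNs).
Qed.

Lemma sub_comb (T : zmodType) (H : T -> Prop) : is_subgroup H ->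
  forall a b (i j : int), H a -> H b -> H (a *~ i + b *~ j).
Proof.
move=> HH a b i j Ha Hb; have [H0 HBs] := HH.
rewrite -[b *~ j]opprK; apply: (HBs); first exact: sub_Mz.
by rewrite -sub0r; apply: (HBs) => //; exact: sub_Mz.
Qed.

Lemma gen2_sub (T : zmodType) (a b : T) : is_subgroup (gen [:: a; b]).
Proof.
split; first by apply/gen2E; exists 0, 0; rewrite !mulr0z addr0.
move=> x y /gen2E [i [j ->]] /gen2E [i' [j' ->]]; apply/gen2E.
exists (i - i'), (j - j'); rewrite !mulrzBr opprD addrACA.
by [].
Qed.

Lemma eventually_all (T : eqType) (P : T -> nat -> Prop) (s : seq T) :
  (forall x, x \in s -> exists K, forall k, (K <= k)%N -> P x k) ->
  exists K, forall x, x \in s -> forall k, (K <= k)%N -> P x k.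
Proof.
elim: s => [|a s IH] H; first by exists 0%N.
have [Ka HKa] := H a (mem_head _ _).
have [Ks HKs] : exists K, forall x, x \in s -> forall k, (K <= k)%N -> P x k.
  by apply: IH => x xs; apply: H; rewrite in_cons xs orbT.
exists (maxn Ka Ks) => x; rewrite in_cons => /orP [/eqP -> | xs] k.
  by rewrite geq_max => /andP [] /HKa.
by rewrite geq_max => /andP [] _ /HKs; apply.
Qed.

Definition intrange (N : nat) : seq int :=
  [seq Posz i | i <- iota 0 N.+1] ++ [seq - Posz i | i <- iota 0 N.+1].

Lemma intrangeP N (z : int) : (`|z| <= N)%N -> z \in intrange N.
Proof.
rewrite /intrange mem_cat; case: z => k hk.
  by apply/orP; left; apply: map_f; rewrite mem_iota.
apply/orP; right; rewrite NegzE; apply: (map_f (fun i : nat => - Posz i)).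
by rewrite mem_iota.
Qed.

Definition boxF n (N : nat) : seq (G n) :=
  [seq ((z, c) : G n) | z <- intrange N, c <- enum ('I_(n.-1).+1)].

Lemma boxFP n N (y : G n) : (`|y.1| <= N)%N -> y \in boxF n N.
Proof.
move=> hy; case: y hy => a b /= ha.
apply: (@allpairs_f _ _ (G n) (fun z c => ((z, c) : G n))).
  exact: intrangeP.
by rewrite mem_enum.
Qed.

Lemma dir2 (n m : nat) (Hs : nat -> G n -> Prop) (K : nat) (g : nat -> G n) :
    (forall k, (K <= k)%N -> seteq (Hs k) (gen [:: ((0 : int), cls n m) : G n; g k])) ->
    tends_to_infty g ->
  chabauty_cvg Hs (gen [:: ((0 : int), cls n m) : G n]).
Proof.
move=> Hgen Hinf x.
case: (classic (gen [:: ((0 : int), cls n m) : G n] x)) => Lx.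
  exists K => k kK; split => // _; apply/Hgen => //.
  move/gen1E: Lx => [i ->]; apply/gen2E; exists i, 0.
  by rewrite mulr0z addr0.
have [KF HKF] := Hinf (boxF n `|x.1|).
exists (maxn K KF) => k; rewrite geq_max => /andP [kK kF]; split => // Hx.
exfalso; move/(Hgen k kK)/gen2E: Hx => [i [j Ex]].
have gF := HKF k kF.
have hN : (`|x.1| < `|(g k).1|)%N.
  by rewrite ltnNge; apply/negP => h; move: gF; rewrite boxFP.
have E1 : x.1 = (g k).1 * j by rewrite Ex /= fstMz /= mul0r add0r fstMz.
case: (eqVneq j 0) => [j0 | jn0].
  apply: Lx; apply/gen1E; exists i; by rewrite Ex j0 mulr0z addr0.
move: hN; rewrite E1 abszM -{2}[`|(g k).1|%N]muln1 ltn_mul2l => /andP [_].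
by rewrite ltnS leqn0 absz_eq0 (negbTE jn0).
Qed.

Definition gfun n (s : seq (G n)) : G n :=
  nth 0 s 0 *~ (egcdz (nth 0 s 0).1 (nth 0 s 1).1).1
  + nth 0 s 1 *~ (egcdz (nth 0 s 0).1 (nth 0 s 1).1).2.

Lemma key n (c0 : Zmod n) (H : G n -> Prop) (s : seq (G n)) :
  is_subgroup H -> size s = 2%N -> seteq H (gen s) ->
  (forall c, H ((0 : int), c) -> gen [:: ((0 : int), c0) : G n] ((0 : int), c)) ->
  H ((0 : int), c0) ->
  seteq H (gen [:: ((0 : int), c0) : G n; gfun n s]).
Proof.
move=> HH; case: s => [|u [|v []]] //= _ Hgen hC Hc0.
have Hu : H u by apply/Hgen/gen2E; exists 1, 0; rewrite mulr0z addr0 mulr1z.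
have Hv : H v by apply/Hgen/gen2E; exists 0, 1; rewrite mulr0z add0r mulr1z.
rewrite /gfun /=.
set g := (X in gen [:: _; X]).
have Hg : H g by apply: sub_comb.
have g1 : g.1 = gcdz u.1 v.1.
  rewrite /g /= !fstMz; case: egcdzP => a b /= Hab _.
  by rewrite mulrC (mulrC v.1).
have Hw : forall w, H w -> (gcdz u.1 v.1 %| w.1)%Z ->
    gen [:: ((0 : int), c0) : G n; g] w.
  move=> w Hw dw.
  set q := (w.1 %/ gcdz u.1 v.1)%Z.
  set r := w - g *~ q.
  have Hr : H r by apply: HH.2 => //; apply: sub_Mz.
  have r1 : r.1 = 0.
    by rewrite /r /= fstMz g1 mulrC /q divzK // subrr.
  have Er : r = ((0 : int), r.2).
    by move: r1; case: (r) => a b /= ->.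
  have := hC r.2; rewrite -Er => /(_ Hr) /gen1E [t Et].
  apply/gen2E; exists t, q; rewrite -Et /r subrK //.
move=> x; split.
  move/Hgen/gen2E => [i [j ->]]; apply: sub_comb; first exact: gen2_sub.
    by apply: Hw => //; exact: dvdz_gcdl.
  by apply: Hw => //; exact: dvdz_gcdr.
move/gen2E => [i [j ->]]; exact: sub_comb.
Qed.

Theorem proposition3 (n m : nat) (hn : (1 <= n)%N) (hm : (m %| n)%N)
    (Hs : nat -> G n -> Prop)
    (hsub : forall k, (0 < k)%N -> is_subgroup (Hs k))
    (hinf : forall k, (0 < k)%N -> infinite_set (Hs k))
    (hrank : forall k, (0 < k)%N -> has_rank (Hs k) 2) :
  chabauty_cvg Hs (gen [:: ((0 : int), cls n m) : G n]) <->
  exists K : nat, exists g : nat -> G n,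
    (forall k, (K <= k)%N -> seteq (Hs k) (gen [:: ((0 : int), cls n m) : G n; g k])) /\
    tends_to_infty g.
Proof.
split; last by move=> [K [g [H1 H2]]]; exact: (@dir2 n m Hs K g H1 H2).
move=> Hc.
set L := gen [:: ((0 : int), cls n m) : G n].
have [K0 HK0] := @eventually_all _
   (fun c k => Hs k ((0 : int), c) <-> L ((0 : int), c)) (enum ('I_(n.-1).+1))
   (fun c _ => Hc ((0 : int), c)).
have hs : forall k, exists s : seq (G n),
    (0 < k)%N -> size s = 2%N /\ seteq (Hs k) (gen s).
  case=> [|k]; first by exists [::].
  have [[s [s2 Hs2]] _] := hrank k.+1 isT.
  by exists s.
pose sk k := proj1_sig (constructive_indefinite_description _ (hs k)).
have Hsk : forall k, (0 < k)%N -> size (sk k) = 2%N /\ seteq (Hs k) (gen (sk k)).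
  by move=> k; exact: (proj2_sig (constructive_indefinite_description _ (hs k))).
pose g k := gfun n (sk k).
have Hgen : forall k, (maxn K0 1 <= k)%N ->
    seteq (Hs k) (gen [:: ((0 : int), cls n m) : G n; g k]).
  move=> k; rewrite geq_max => /andP [kK k1].
  have [s2 Hs2] := Hsk k k1.
  apply: key => //; first exact: hsub.
    move=> c Hk; apply/(HK0 c _ k kK) => //; by rewrite mem_enum.
  apply/(HK0 (cls n m) _ k kK); first by rewrite mem_enum.
  by apply/gen1E; exists 1; rewrite mulr1z.
exists (maxn K0 1), g; split => // F.
have [K2 HK2] := @eventually_all _ (fun f k => ~ L f -> ~ Hs k f) F
  (fun f _ => match classic (L f) with
    | or_introl Lf => ex_intro _ 0%N (fun k _ nL => False_ind _ (nL Lf))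
    | or_intror nLf => let (K, HK) := Hc f in
        ex_intro _ K (fun k hk _ Hf => nLf (proj1 (HK k hk) Hf)) end).
exists (maxn (maxn K0 1) K2) => k; rewrite geq_max => /andP [kK kK2].
apply/negP => gF.
have Hgk : Hs k (g k).
  by apply/(Hgen k kK)/gen2E; exists 0, 1; rewrite mulr0z add0r mulr1z.
have Lg : L (g k) by apply: NNPP => nL; exact: (HK2 _ gF k kK2 nL Hgk).
have g1 : (g k).1 = 0 by move/gen1E: Lg => [i ->]; rewrite fstMz mul0r.
have k1 : (0 < k)%N by move: kK; rewrite geq_max => /andP [].
have [x [Hx xs]] := hinf k k1 [seq ((0 : int), c) : G n | c <- enum ('I_(n.-1).+1)].
move/(Hgen k kK)/gen2E: Hx => [i [j Ex]].
have x1 : x.1 = 0 by rewrite Ex /= !fstMz g1 !mul0r addr0.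
move/negP: xs; apply.
have -> : x = ((0 : int), x.2) by move: x1; case: (x) => a b /= ->.
by apply: (map_f (fun c => ((0 : int), c) : G n)); rewrite mem_enum.
Qed.
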